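(* Fix $\delta>0$ and an integer $d\ge0$. Let $K(s)$, $s\in B^d(1)$, be a continuous family of links transverse to $\xi_0$ in $\mathbb{R}^3$ such that $K(s)\subset B(\delta)$ for all $s\in\partial B^d(1)$. Then there is a homotopy $K(s,t)$, $0\le t\le1$, through transverse links, with $K(s,t)=K(s)$ for $s\in\partial B^d(1)$, $K(s,0)=K(s)$ and $K(s,1)\subset B(\delta)$ for every $s\in B^d(1)$. In particular, the space of transverse links in $\mathbb{R}^3$ is weakly homotopy equivalent to the space of transverse links contained in $B(\delta)$.
   Context: $\xi_0=\ker(dx_3-x_2\,dx_1+x_1\,dx_2)$ on $\mathbb{R}^3$; a link is transverse if it is everywhere transverse to $\xi_0$. $B^d(r)$ denotes the closed $d$-dimensional ball of radius $r$ about the origin and $B(r)=B^3(r)\subset\mathbb{R}^3$. *)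

(* Defs.v *)
From HB Require Import structures.
From mathcomp Require Import all_boot all_order all_algebra.
From mathcomp Require Import all_classical all_reals all_analysis.
Set Implicit Arguments. Unset Strict Implicit. Unset Printing Implicit Defensive.
Import Order.TTheory GRing.Theory Num.Theory.
Import numFieldNormedType.Exports.
Local Open Scope classical_set_scope.
Local Open Scope ring_scope.

Section Links.
Variable R : realType.

(* A parametrized link with n components: component i, coordinate c (x1,x2,x3
   for c = 0,1,2), parameter theta in R (1-periodic). *)
Definition plink (n : nat) := 'I_n -> 'I_3 -> R -> R.

Definition smooth_fun (f : R -> R) : Prop :=
  forall (k : nat) (x : R), derivable (derive1n k f) x 1.

Definition periodic1 (f : R -> R) : Prop := forall t, f (t + 1) = f t.

Definition is_link n (K : plink n) : Prop :=
  (forall i c, smooth_fun (K i c) /\ periodic1 (K i c)) /\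
  (forall i j t u, 0 <= t < 1 -> 0 <= u < 1 ->
     (forall c, K i c t = K j c u) -> i = j /\ t = u) /\
  (forall i t, exists c, derive1 (K i c) t != 0).

(* the contact form dx3 - x2 dx1 + x1 dx2 evaluated on the velocity *)
Definition alpha0_vel n (K : plink n) (i : 'I_n) (t : R) : R :=
  derive1 (K i 2%:R) t - K i 1%:R t * derive1 (K i 0%:R) t
    + K i 0%:R t * derive1 (K i 1%:R) t.

Definition transverse_link n (K : plink n) : Prop :=
  is_link K /\ forall i t, alpha0_vel K i t != 0.

Definition link_in_ball n (delta : R) (K : plink n) : Prop :=
  forall i t, K i 0%:R t ^+ 2 + K i 1%:R t ^+ 2 + K i 2%:R t ^+ 2 <= delta ^+ 2.

(* continuity of a family of links in the C^infty topology:
   every theta-derivative is jointly continuous in (parameter, theta) *)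
Definition cont_family n (P : topologicalType) (A : set P)
  (F : P -> plink n) : Prop :=
  forall (k : nat) i c,
    {within A `*` setT, continuous (fun p : P * R => derive1n k (F p.1 i c) p.2)}.

Definition sqnorm d (s : 'rV[R]_d) : R := \sum_(j < d) s ord0 j ^+ 2.
Definition unit_ball (d : nat) : set 'rV[R]_d := [set s | sqnorm s <= 1].
Definition unit_sphere (d : nat) : set 'rV[R]_d := [set s | sqnorm s = 1].

End Links.
Arguments unit_ball {R} d _.
Arguments unit_sphere {R} d _.

(* Main.v *)
Require Import Defs.
From HB Require Import structures.
From mathcomp Require Import all_boot all_order all_algebra.
From mathcomp Require Import all_classical all_reals all_analysis.
From mathcomp Require Import ring lra.
Import Order.TTheory GRing.Theory Num.Theory.
Import numFieldNormedType.Exports.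
Local Open Scope classical_set_scope.
Local Open Scope ring_scope.

Section H.
Variable R : realType.

Lemma derive1_scal (m : R) (f : R -> R) x : derivable f x 1 ->
  derive1 (fun y => m * f y) x = m * derive1 f x.
Proof.
move=> df; rewrite !derive1E.
exact: (deriveZ m df).
Qed.

Lemma derivable_scal (m : R) (f : R -> R) x : derivable f x 1 ->
  derivable (fun y => m * f y) x 1.
Proof. move=> df; exact: (derivableZ (k:=m) df). Qed.

Lemma derive1n_scal (m : R) (f : R -> R) : smooth_fun f -> forall k,
  derive1n k (fun y => m * f y) = fun y => m * derive1n k f y.
Proof.
move=> sf; elim=> [//|k IH].
apply/funext => y; rewrite /derive1n iterS -/(derive1n k _) IH.
by rewrite derive1_scal // ; exact: sf.
Qed.

Lemma smooth_scal (m : R) (f : R -> R) : smooth_fun f -> smooth_fun (fun y => m * f y).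
Proof. by move=> sf k x; rewrite derive1n_scal //; apply: derivable_scal; exact: sf. Qed.

Lemma within_map (X Y : topologicalType) (A : set X) (B : set Y) (phi : X -> Y) x :
  {for x, continuous phi} -> (forall z, A z -> B (phi z)) ->
  phi @ within A (nbhs x) --> within B (nbhs (phi x)).
Proof.
move=> cphi AB W WB.
have := cphi (fun y => B y -> W y) WB; rewrite /within /= !nbhs_simpl.
move=> H; change (nbhs x (fun z => A z -> W (phi z))).
have H2 : nbhs x (fun z => B (phi z) -> W (phi z)) := H.
by apply: filterS H2 => z /= Hz Az; exact: Hz (AB _ Az).
Qed.

Lemma fst_cont (X Y : topologicalType) : continuous (@fst X Y).
Proof. by move=> [a b]; apply: cvg_fst. Qed.
Lemma snd_cont (X Y : topologicalType) : continuous (@snd X Y).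
Proof. by move=> [a b]; apply: cvg_snd. Qed.


Section Sup.
Variables (P : topologicalType) (A : set P) (I : finType) (g : I -> P -> R -> R).
Hypothesis gc : forall i, {within A `*` setT, continuous (fun p : P * R => g i p.1 p.2)}.
Hypothesis gc1 : forall i s, A s -> continuous (g i s).

Definition Sg s := [set x : R | x = 0 \/ exists i θ, 0 <= θ <= 1 /\ x = g i s θ].
Definition Mg s := sup (Sg s).

Lemma Sg_ub s : A s -> has_ubound (Sg s).
Proof.
move=> As.
have : forall i, exists c : R, 0 <= c <= 1 /\ forall t, 0 <= t <= 1 -> g i s t <= g i s c.
  move=> i; have [c c01 cmax] := @EVT_max R (g i s) 0 1 ler01 (continuous_subspaceT (gc1 i s As)).
  exists c; split; first by move: c01; rewrite in_itv.
  by move=> t t01; apply: cmax; rewrite in_itv.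
move/choice => [f Hf].
exists (\sum_i `|g i s (f i)|) => x [->|[i [t [t01 ->]]]].
  by apply: sumr_ge0 => i _; exact: normr_ge0.
apply: (le_trans (proj2 (Hf i) t t01)); apply: (le_trans (ler_norm _)).
rewrite (bigD1 i) //= lerDl; apply: sumr_ge0 => j _; exact: normr_ge0.
Qed.

Lemma Sg_sup s : A s -> has_sup (Sg s).
Proof. by move=> As; split; [exists 0; left | exact: Sg_ub]. Qed.

Lemma Mg_ge0 s : A s -> 0 <= Mg s.
Proof. by move=> As; apply: sup_upper_bound; [exact: Sg_sup | left]. Qed.

Lemma Mg_ge s i t : A s -> 0 <= t <= 1 -> g i s t <= Mg s.
Proof. by move=> As t01; apply: sup_upper_bound; [exact: Sg_sup | right; exists i, t]. Qed.

Lemma near_swap (s0 : P) (th : R) (Q : P * R -> Prop) :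
  (\forall q \near within (A `*` setT) (nbhs (s0, th)), Q q) ->
  (\forall t \near th & s \near within A (nbhs s0), Q (s, t)).
Proof.
move=> [[U V] [/= nU nV] UV].
exists (V, fun s => U s /\ A s) => /=.
  split => //; by apply: filterS nU => s Us As.
by move=> [t s] [/= Vt [Us As]]; apply: (UV (s, t)).
Qed.

Lemma near_slice (s0 : P) (th : R) (Q : P * R -> Prop) :
  (\forall q \near within (A `*` setT) (nbhs (s0, th)), Q q) ->
  (\forall s \near within A (nbhs s0), Q (s, th)).
Proof.
move=> [[U V] [/= nU nV] UV].
apply: filterS nU => s Us As; apply: (UV (s, th)) => //=.
by split => //; exact: nbhs_singleton.
Qed.

Lemma Mg_cont : {within A, continuous Mg}.
Proof.
apply/subspace_continuousP => s0 As0.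
apply/cvgrPdist_lt => e e0.
have e20 : 0 < e / 2 by rewrite divr_gt0.
have up : \forall s \near within A (nbhs s0), forall t, `[0, 1]%classic t ->
    forall i, g i s t < Mg s0 + e / 2.
  have := (proj1 (compact_near_coveringP _) (@segment_compact R 0 1) P
     (within A (nbhs s0)) (fun s t => forall i, g i s t < Mg s0 + e / 2) _).
  apply => t t01.
  apply: (@near_swap s0 t (fun q : P * R => forall i, g i q.1 q.2 < Mg s0 + e / 2)).
  apply: filter_forall => i.
  have := gc i; rewrite -/(continuous _) => /subspace_continuousP /(_ (s0, t)).
  move=> /(_ (conj As0 Logic.I)) /cvgrPdist_lt /(_ _ e20).
  apply: filterS => q /=; rewrite ltr_distlC => /andP [_ h].
  apply: (lt_le_trans h); rewrite lerD2r; apply: Mg_ge => //.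
have lo : \forall s \near within A (nbhs s0), Mg s0 - e < Mg s.
  have hlt : Mg s0 - e / 2 < Mg s0 by rewrite ltrBlDr ltrDl.
  have [y Sy yl] := @sup_gt R (Sg s0) (Mg s0 - e / 2) (ex_intro _ 0 (or_introl erefl)) hlt.
  case: Sy => [y0|[i [t [t01 yg]]]].
    apply: filterS (@withinT _ (nbhs s0) A _) => s As.
    apply: (lt_le_trans _ (Mg_ge0 s As)); rewrite y0 in yl; lra.
  have := gc i; rewrite -/(continuous _) => /subspace_continuousP /(_ (s0, t)).
  move=> /(_ (conj As0 Logic.I)) /cvgrPdist_lt /(_ _ e20) /near_slice.
  apply: filterS2 (withinT _ _) => s As /=; rewrite ltr_distlC => /andP [h _].
  apply: (lt_le_trans _ (Mg_ge s i t As t01)); apply: le_lt_trans h.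
  rewrite /from_subspace /= -yg; lra.
apply: filterS2 up lo => s Hup Hlo.
rewrite /from_subspace /= ltr_distlC Hlo /=.
have : Mg s <= Mg s0 + e / 2.
  apply: ge_sup; first by exists 0; left.
  move=> x [->|[i [t [t01 ->]]]].
    have := Mg_ge0 s0 As0; lra.
  by apply: ltW; apply: Hup; rewrite /= in_itv.
lra.
Qed.

End Sup.

Lemma per_nat (f : R -> R) : periodic1 f -> forall x (k : nat), f (x + k%:R) = f x.
Proof.
move=> pf x; elim=> [|k IH]; first by rewrite addr0.
by rewrite -natr1 addrA pf.
Qed.

Lemma per_int (f : R -> R) : periodic1 f -> forall x (z : int), f (x + z%:~R) = f x.
Proof.
move=> pf x [k|k]; first by rewrite -pmulrn per_nat.
rewrite NegzE mulrNz -pmulrn.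
by rewrite -(@per_nat f pf (x - k.+1%:R) k.+1) subrK.
Qed.

Lemma per_red (f : R -> R) : periodic1 f -> forall x, exists y, 0 <= y <= 1 /\ f x = f y.
Proof.
move=> pf x; exists (x - (Num.floor x)%:~R); split.
  have := floor_itv x; rewrite intrD => /andP [h1 h2]; apply/andP; split; lra.
by rewrite -(@per_int f pf (x - _) (Num.floor x)) subrK.
Qed.

Section WC.
Variables (T : topologicalType) (A : set T).

Lemma wcD (f g : T -> R) : {within A, continuous f} -> {within A, continuous g} ->
  {within A, continuous (fun x => f x + g x)}.
Proof.
move=> /subspace_continuousP hf /subspace_continuousP hg.
by apply/subspace_continuousP => x Ax; apply: cvgD; [exact: hf | exact: hg].
Qed.

Lemma wcM (f g : T -> R) : {within A, continuous f} -> {within A, continuous g} ->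
  {within A, continuous (fun x => f x * g x)}.
Proof.
move=> /subspace_continuousP hf /subspace_continuousP hg.
by apply/subspace_continuousP => x Ax; apply: cvgM; [exact: hf | exact: hg].
Qed.

Lemma wcN (f : T -> R) : {within A, continuous f} ->
  {within A, continuous (fun x => - f x)}.
Proof.
move=> /subspace_continuousP hf.
by apply/subspace_continuousP => x Ax; apply: cvgN; exact: hf.
Qed.

Lemma wcC (a : R) : {within A, continuous (fun _ : T => a)}.
Proof. by apply/subspace_continuousP => x Ax; exact: cvg_cst. Qed.

Lemma wcNorm (f : T -> R) : {within A, continuous f} ->
  {within A, continuous (fun x => `|f x|)}.
Proof.
move=> /subspace_continuousP hf.
by apply/subspace_continuousP => x Ax; apply: cvg_norm; exact: hf.
Qed.

Lemma wcV (f : T -> R) : (forall x, A x -> f x != 0) -> {within A, continuous f} ->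
  {within A, continuous (fun x => (f x)^-1)}.
Proof.
move=> nz /subspace_continuousP hf.
by apply/subspace_continuousP => x Ax; apply: cvgV; [exact: nz | exact: hf].
Qed.

Lemma wcX (f : T -> R) k : {within A, continuous f} ->
  {within A, continuous (fun x => f x ^+ k)}.
Proof.
move=> hf; elim: k => [|k IH]; first exact: wcC.
under eq_fun do rewrite exprS; exact: wcM.
Qed.

Lemma wc_comp (Y : topologicalType) (B : set Y) (phi : T -> Y) (f : Y -> R) :
  continuous phi -> (forall z, A z -> B (phi z)) -> {within B, continuous f} ->
  {within A, continuous (fun x => f (phi x))}.
Proof.
move=> cphi AB /subspace_continuousP hf.
apply/subspace_continuousP => x Ax.
have h1 := @within_map _ _ A B phi x (cphi x) AB; have h2 := hf (phi x) (AB _ Ax).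
exact: (cvg_comp _ _ h1 h2).
Qed.

End WC.


Section Main.
Variables (delta : R) (d n : nat) (K : 'rV[R]_d -> plink R n).
Hypothesis dpos : 0 < delta.
Hypothesis Ktr : forall s, unit_ball d s -> transverse_link (K s).
Hypothesis Kc : cont_family (unit_ball d) K.
Hypothesis Ksph : forall s, unit_sphere d s -> link_in_ball delta (K s).

Let Bl := @unit_ball R d.

Definition G (i : 'I_n) s t :=
  K s i 0%:R t ^+ 2 + K s i 1%:R t ^+ 2 + K s i 2%:R t ^+ 2.

Lemma Kc0 i c : {within Bl `*` setT, continuous (fun p : 'rV[R]_d * R => K p.1 i c p.2)}.
Proof. exact: (Kc 0 i c). Qed.

Lemma Ksm s i c : Bl s -> smooth_fun (K s i c).
Proof. by move=> Bs; have [[h _] _] := Ktr _ Bs; exact: (h i c).1. Qed.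

Lemma Kper s i c : Bl s -> periodic1 (K s i c).
Proof. by move=> Bs; have [[h _] _] := Ktr _ Bs; exact: (h i c).2. Qed.

Lemma Kcont s i c : Bl s -> continuous (K s i c).
Proof.
move=> Bs x; apply: differentiable_continuous; apply/derivable1_diffP.
exact: (Ksm s i c Bs 0 x).
Qed.

Lemma Gc i : {within Bl `*` setT, continuous (fun p : 'rV[R]_d * R => G i p.1 p.2)}.
Proof.
rewrite /G; apply: wcD; [apply: wcD|]; apply: wcX; exact: Kc0.
Qed.

Lemma Gc1 i s : Bl s -> continuous (G i s).
Proof.
move=> Bs; apply/continuous_subspace_setT; rewrite /G.
by apply: wcD; [apply: wcD|]; apply: wcX;
  exact: (proj1 (continuous_subspace_setT _) (Kcont s _ _ Bs)).
Qed.

Definition M := Mg _ _ G.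

Lemma Mc : {within Bl, continuous M}.
Proof. exact: (Mg_cont _ _ _ _ Gc Gc1). Qed.

Definition mx (a b : R) := (a + b + `|a - b|) / 2.

Lemma mx_ge a b : a <= mx a b /\ b <= mx a b.
Proof.
rewrite /mx; split; rewrite ler_pdivlMr //.
  have := ler_norm (a - b); lra.
have := ler_norm (b - a); rewrite distrC; lra.
Qed.

Lemma mx_eq a b : a <= b -> mx a b = b.
Proof. by move=> ab; rewrite /mx ler0_norm ?subr_le0 //; lra. Qed.

Definition lam s := delta ^+ 2 / mx (M s) (delta ^+ 2).

Lemma d2pos : 0 < delta ^+ 2.
Proof. exact: exprn_gt0. Qed.

Lemma mx_pos s : 0 < mx (M s) (delta ^+ 2).
Proof. exact: (lt_le_trans d2pos (mx_ge _ _).2). Qed.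

Lemma lam_pos s : 0 < lam s.
Proof. by rewrite /lam divr_gt0 // ?d2pos // mx_pos. Qed.

Lemma lam_le1 s : lam s <= 1.
Proof. by rewrite /lam ler_pdivrMr ?mx_pos // mul1r (mx_ge _ _).2. Qed.

Lemma lamM s : 0 <= M s -> lam s * M s <= delta ^+ 2.
Proof.
move=> M0; rewrite /lam mulrAC ler_pdivrMr ?mx_pos //.
by rewrite ler_wpM2l ?(ltW d2pos) // (mx_ge _ _).1.
Qed.

Lemma lam_c : {within Bl, continuous lam}.
Proof.
rewrite /lam /mx.
apply: wcM; first exact: wcC.
apply: wcV; first by move=> x _; rewrite gt_eqF // -/(mx _ _) mx_pos.
apply: wcM; last exact: wcC.
apply: wcD; first by apply: wcD; [exact: Mc | exact: wcC].
apply: wcNorm; apply: wcD; [exact: Mc | exact: wcC].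
Qed.

Let D := Bl `*` (`[0, 1]%classic : set R).

Definition mu (p : 'rV[R]_d * R) := 1 - p.2 * (1 - lam p.1).

Lemma mu_c : {within D, continuous mu}.
Proof.
rewrite /mu; apply: wcD; first exact: wcC.
apply: wcN; apply: wcM.
  exact: (continuous_subspaceT (@snd_cont _ _)).
apply: wcD; first exact: wcC.
apply: wcN; apply: (@wc_comp _ D _ Bl fst lam (@fst_cont _ _) _ lam_c).
by move=> z [].
Qed.


Lemma D_inv p : D p -> Bl p.1 /\ 0 <= p.2 <= 1.
Proof. by case=> Bs; rewrite /= in_itv. Qed.

Lemma mu_bounds p : D p -> lam p.1 <= mu p <= 1.
Proof.
move=> /D_inv [_ /andP [t0 t1]].
have l0 := lam_pos p.1; have l1 := lam_le1 p.1.
have h1 : 0 <= (1 - p.2) * (1 - lam p.1) by apply: mulr_ge0; lra.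
have h2 : 0 <= p.2 * (1 - lam p.1) by apply: mulr_ge0; lra.
rewrite /mu; apply/andP; split; lra.
Qed.

Lemma mu_pos p : D p -> 0 < mu p.
Proof. by move=> Dp; have /andP [h _] := mu_bounds _ Dp; exact: lt_le_trans (lam_pos _) h. Qed.

Definition ex (c : 'I_3) : nat := if c == 2%:R then 2%N else 1%N.

Definition Hh (p : 'rV[R]_d * R) : plink R n :=
  fun i c t => mu p ^+ ex c * K p.1 i c t.

Lemma H_cont : cont_family D Hh.
Proof.
move=> k i c.
apply: (@subspace_eq_continuous _ _ _
  (fun p : ('rV[R]_d * R) * R => mu p.1 ^+ ex c * derive1n k (K p.1.1 i c) p.2)).
  move=> [[s t] th]; rewrite inE => -[[/= Bs _] _].
  rewrite /from_subspace /Hh /= (derive1n_scal (mu (s, t) ^+ ex c) _ (Ksm s i c Bs)) //.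
apply: wcM.
  apply: wcX.
  exact: (@wc_comp _ (D `*` setT) _ D fst mu (@fst_cont _ _) (fun z h => h.1) mu_c).
have cphi : continuous (fun p : ('rV[R]_d * R) * R => (p.1.1, p.2)).
  move=> [[a b] c0] W /= [[U V]] [/= Ua Vc] UVW.
  exists (U `*` setT, V) => /=.
    split => //; exists (U, setT) => //=; split => //; exact: filterT.
  by move=> [[x y] z] [[Ux _] Vz]; exact: UVW.
have AB : forall z : ('rV[R]_d * R) * R, (D `*` setT) z -> (Bl `*` setT) (z.1.1, z.2).
  by move=> [[s t] th] [[Bs _] _].
exact: (@wc_comp _ (D `*` setT) _ (Bl `*` setT) (fun p => (p.1.1, p.2))
   (fun q => derive1n k (K q.1 i c) q.2) cphi AB (Kc k i c)).
Qed.

Lemma alphaH p i th : Bl p.1 ->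
  alpha0_vel (Hh p) i th = mu p ^+ 2 * alpha0_vel (K p.1) i th.
Proof.
move=> Bs; rewrite /alpha0_vel /Hh /= !derive1_scal; try exact: (Ksm _ _ _ Bs 0).
rewrite /ex /=; ring.
Qed.

Lemma H_tr s t : Bl s -> 0 <= t <= 1 -> transverse_link (Hh (s, t)).
Proof.
move=> Bs t01.
have Dp : D (s, t) by split => //=; rewrite in_itv.
have m0 := mu_pos _ Dp.
have mne : forall c, mu (s, t) ^+ ex c != 0 by move=> c; rewrite expf_neq0 // gt_eqF.
have [[Ksp [Kinj Kimm]] Kal] := Ktr _ Bs.
split; [split; [|split]|].
- move=> i c; split; first by apply: smooth_scal; exact: Ksm.
  by move=> th; rewrite /Hh /= Kper.
- move=> i j th u th01 u01 eq; apply: (Kinj i j th u th01 u01) => c.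
  by have := eq c; rewrite /Hh /=; apply: mulfI.
- move=> i th; have [c hc] := Kimm i th; exists c.
  rewrite /Hh /= derive1_scal; last exact: (Ksm _ _ _ Bs 0).
  by rewrite mulf_neq0.
- move=> i th; rewrite alphaH // mulf_neq0 //; first by rewrite expf_neq0 // gt_eqF.
Qed.

Lemma M_sph s : unit_sphere d s -> M s <= delta ^+ 2.
Proof.
move=> Ss; apply: ge_sup; first by exists 0; left.
move=> x [->|[i [th [_ ->]]]]; first exact: (ltW d2pos).
exact: (Ksph _ Ss i th).
Qed.

Lemma sph_ball s : unit_sphere d s -> Bl s.
Proof. by rewrite /unit_sphere /Bl /unit_ball /= => ->. Qed.

Lemma H_sph s t : unit_sphere d s -> Hh (s, t) = K s.
Proof.
move=> Ss.
have l1 : lam s = 1.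
  by rewrite /lam mx_eq ?M_sph // divff // gt_eqF // d2pos.
apply/funext => i; apply/funext => c; apply/funext => th.
by rewrite /Hh /mu /= l1 subrr mulr0 subr0 expr1n mul1r.
Qed.

Lemma H_0 s : Hh (s, 0) = K s.
Proof.
apply/funext => i; apply/funext => c; apply/funext => th.
by rewrite /Hh /mu /= mul0r subr0 expr1n mul1r.
Qed.

Lemma H_1 s : Bl s -> link_in_ball delta (Hh (s, 1)).
Proof.
move=> Bs i th.
set th' := th - (Num.floor th)%:~R.
have th01 : 0 <= th' <= 1.
  have := floor_itv th; rewrite intrD => /andP [h1 h2]; apply/andP; split; rewrite /th'; lra.
have per c : K s i c th = K s i c th'.
  by rewrite /th' -(@per_int _ (Kper _ i c Bs) (th - _) (Num.floor th)) subrK.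
have hG := Mg_ge _ _ _ _ Gc1 s i th' Bs th01.
have M0 : 0 <= M s by apply: (le_trans _ (Mg_ge0 _ _ _ _ Gc1 s Bs)).
have lM := lamM s M0.
have l0 := lam_pos s; have l1 := lam_le1 s.
have mu1 : mu (s, 1) = lam s by rewrite /mu /= mul1r; lra.
rewrite /Hh /= mu1 /ex /= !per.
rewrite !expr1.
move: hG lM l0 l1 M0; rewrite /G -/(M s).
move: (K s i 0%:R th') (K s i 1%:R th') (K s i 2%:R th') (lam s) (M s).
move=> a b c l Mv hG lM l0 l1 M0.
have h1 : 0 <= l ^+ 2 * c ^+ 2 * (1 - l ^+ 2).
  apply: mulr_ge0; first by apply: mulr_ge0; exact: sqr_ge0.
  rewrite subr_ge0 expr_le1 //; exact: ltW.
have h2 : 0 <= l * (1 - l) * (a ^+ 2 + b ^+ 2 + c ^+ 2).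
  apply: mulr_ge0; first by apply: mulr_ge0; lra.
  by rewrite addr_ge0 // ?addr_ge0 // sqr_ge0.
have h3 : 0 <= l * (Mv - (a ^+ 2 + b ^+ 2 + c ^+ 2)).
  by apply: mulr_ge0; lra.
nra.
Qed.

End Main.
End H.

Theorem lemma3p6 (R : realType) (delta : R) (d n : nat)
    (K : 'rV[R]_d -> plink R n) :
  0 < delta ->
  (forall s, unit_ball d s -> transverse_link (K s)) ->
  cont_family (unit_ball d) K ->
  (forall s, unit_sphere d s -> link_in_ball delta (K s)) ->
  exists H : 'rV[R]_d * R -> plink R n,
    cont_family (P := ('rV[R]_d * R)%type) (unit_ball d `*` `[0, 1]%classic) H /\
    (forall s t, unit_ball d s -> 0 <= t <= 1 -> transverse_link (H (s, t))) /\
    (forall s t, unit_sphere d s -> 0 <= t <= 1 -> H (s, t) = K s) /\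
    (forall s, unit_ball d s -> H (s, 0) = K s) /\
    (forall s, unit_ball d s -> link_in_ball delta (H (s, 1))).
Proof.
move=> dpos Ktr Kc Ksph.
exists (@Hh R delta d n K); split; first exact: (@H_cont R delta d n K dpos Ktr Kc).
split; first by move=> s t Bs t01; exact: (@H_tr R delta d n K dpos Ktr s t Bs t01).
split; first by move=> s t Ss _; exact: (@H_sph R delta d n K dpos Ksph s t Ss).
split; first by move=> s _; exact: H_0.
by move=> s Bs; exact: (@H_1 R delta d n K dpos Ktr s Bs).
Qed.
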